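(* Let $r,\sigma,s,c,\lambda,a,q,d,\gamma,b>0$ with $a<\lambda$, $b<\gamma$, $1-\lambda r>0$, $1-br>0$, and $\theta=\sqrt{2r/\sigma^2}$. For $w>1$ let $$G(w)=\frac{(1-\lambda r)\big((\ln w-1)w^2+\ln w+1\big)-cr\theta(w^2+1)}{\theta(1-ar)(w-1)^2}+\frac{s}{1-ar}-\frac{q}{1-br}-\frac{w+1}{\theta(w-1)}-\frac{2\big(\theta rd-(1-\gamma r)\ln w\big)w}{\theta(1-br)(w-1)^2}.$$ Assume there exists $\hat w>1$ with $G(\hat w)=0$ and $$(1-\lambda r)(\hat w-\hat w\ln\hat w-1)+cr\theta\hat w>0.$$ Let $\bar x_2=\frac{q}{1-br}+\frac{\hat w+1}{\theta(\hat w-1)}+\frac{2(\theta rd-(1-\gamma r)\ln\hat w)\hat w}{\theta(1-br)(\hat w-1)^2}$, $\bar x_1=\bar x_2-\frac{\ln\hat w}{\theta}$, $$C_{11}=\frac{e^{-\theta\bar x_1}}{2}\Big[(a-\lambda)\bar x_2-\Big(\bar x_1+\frac1\theta\Big)\frac{1-\lambda r}{r}-c+\frac sr\Big],\quad C_{12}=\frac{e^{\theta\bar x_1}}{2}\Big[(a-\lambda)\bar x_2-\Big(\bar x_1-\frac1\theta\Big)\frac{1-\lambda r}{r}-c+\frac sr\Big],$$ $\varphi_1(x)=C_{11}e^{\theta x}+C_{12}e^{-\theta x}+\frac{x-s}{r}$, and $$W_1(x)=\begin{cases}ax & x\ge\bar x_2\\ \varphi_1(x)&\bar x_1<x<\bar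 x_2\\ a\bar x_2-c-\lambda(\bar x_2-x)&x\le\bar x_1.\end{cases}$$ For $x\in\mathbb{R}$ let $\mathcal{M}W_1(x)=\sup_{\delta\ge0}\{W_1(x+\delta)-c-\lambda\delta\}$. Then for each $x$ the maximizer over $\delta\ge0$ of $W_1(x+\delta)-c-\lambda\delta$ is unique and equals $\delta(x)=(\bar x_2-x)\mathbf{1}_{(-\infty,\bar x_2]}(x)$, and $$\{\mathcal{M}W_1-W_1<0\}=(\bar x_1,\infty),\qquad\{\mathcal{M}W_1-W_1=0\}=(-\infty,\bar x_1].$$
   Context: This is the candidate equilibrium payoff of player P1 in the second type of Nash equilibrium (P1 forces P2 to stop) of a linear impulse controller–stopper game: state $X_t=x+\sigma W_t+\sum_{\tau_n\le t}\delta_n$, P1 pays $c+\lambda|\delta|$ per impulse $\delta\ge0$, receives running payoff $x-s$ and terminal payoff $ax$, discounted at rate $r$. *)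

(* Defs.v *)
From Stdlib Require Import Reals Lra.
From Coquelicot Require Import Coquelicot.
Open Scope R_scope.

Definition theta (r sigma : R) : R := sqrt (2 * r / sigma ^ 2).

Definition Gfun (r sigma s c lam a q d gam b w : R) : R :=
  let th := theta r sigma in
  ((1 - lam * r) * ((ln w - 1) * w ^ 2 + ln w + 1) - c * r * th * (w ^ 2 + 1))
     / (th * (1 - a * r) * (w - 1) ^ 2)
  + s / (1 - a * r) - q / (1 - b * r) - (w + 1) / (th * (w - 1))
  - 2 * (th * r * d - (1 - gam * r) * ln w) * w / (th * (1 - b * r) * (w - 1) ^ 2).

Definition xbar2 (r sigma q d gam b w : R) : R :=
  let th := theta r sigma in
  q / (1 - b * r) + (w + 1) / (th * (w - 1))
  + 2 * (th * r * d - (1 - gam * r) * ln w) * w / (th * (1 - b * r) * (w - 1) ^ 2).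

Definition xbar1 (r sigma q d gam b w : R) : R :=
  xbar2 r sigma q d gam b w - ln w / theta r sigma.

Definition C11 (r sigma s c lam a q d gam b w : R) : R :=
  let th := theta r sigma in
  let x1 := xbar1 r sigma q d gam b w in
  let x2 := xbar2 r sigma q d gam b w in
  exp (- th * x1) / 2 *
  ((a - lam) * x2 - (x1 + 1 / th) * ((1 - lam * r) / r) - c + s / r).

Definition C12 (r sigma s c lam a q d gam b w : R) : R :=
  let th := theta r sigma in
  let x1 := xbar1 r sigma q d gam b w in
  let x2 := xbar2 r sigma q d gam b w in
  exp (th * x1) / 2 *
  ((a - lam) * x2 - (x1 - 1 / th) * ((1 - lam * r) / r) - c + s / r).

Definition phi1 (r sigma s c lam a q d gam b w x : R) : R :=
  let th := theta r sigma in
  C11 r sigma s c lam a q d gam b w * exp (th * x)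
  + C12 r sigma s c lam a q d gam b w * exp (- th * x) + (x - s) / r.

Definition W1 (r sigma s c lam a q d gam b w x : R) : R :=
  let x1 := xbar1 r sigma q d gam b w in
  let x2 := xbar2 r sigma q d gam b w in
  if Rle_dec x2 x then a * x
  else if Rlt_dec x1 x then phi1 r sigma s c lam a q d gam b w x
  else a * x2 - c - lam * (x2 - x).

Definition MW1 (r sigma s c lam a q d gam b w x : R) : Rbar :=
  Lub_Rbar (fun y => exists delta, 0 <= delta /\
     y = W1 r sigma s c lam a q d gam b w (x + delta) - c - lam * delta).

Definition delta_opt (r sigma q d gam b w x : R) : R :=
  if Rle_dec x (xbar2 r sigma q d gam b w) then xbar2 r sigma q d gam b w - x else 0.

(* Main.v *)
Require Import Defs.
From Stdlib Require Import Reals Lra.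
From Coquelicot Require Import Coquelicot.
Open Scope R_scope.

Section K.
Variables (r sigma s c lam a q d gam b w : R).
Hypotheses (hr : 0 < r) (hsig : 0 < sigma) (hc : 0 < c) (hal : a < lam)
  (hlr : 1 - lam * r > 0) (hw : 1 < w)
  (hG : Gfun r sigma s c lam a q d gam b w = 0)
  (hex : (1 - lam * r) * (w - w * ln w - 1) + c * r * theta r sigma * w > 0).

Let th := theta r sigma.
Let X := xbar2 r sigma q d gam b w.
Let x1 := xbar1 r sigma q d gam b w.
Let L := ln w.
Let A := (a - lam) * X - (x1 + 1 / th) * ((1 - lam * r) / r) - c + s / r.
Let B := (a - lam) * X - (x1 - 1 / th) * ((1 - lam * r) / r) - c + s / r.

Lemma th_pos : 0 < th.
Proof. unfold th, theta. apply sqrt_lt_R0. apply Rdiv_lt_0_compat; [lra| apply pow_lt; lra]. Qed.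

Lemma L_pos : 0 < L.
Proof. unfold L. rewrite <- ln_1. apply ln_increasing; lra. Qed.

Lemma expL : exp L = w.
Proof. unfold L. apply exp_ln. lra. Qed.

Lemma x1_def : x1 = X - L / th.
Proof. reflexivity. Qed.

Lemma x1_lt : x1 < X.
Proof. rewrite x1_def. pose proof th_pos. pose proof L_pos.
  assert (0 < L / th) by (apply Rdiv_lt_0_compat; lra). lra. Qed.

Let E := (1 - lam * r) * ((L - 1) * w ^ 2 + L + 1) - c * r * th * (w ^ 2 + 1).

Lemma X_eq : X = E / (th * (1 - a * r) * (w - 1) ^ 2) + s / (1 - a * r).
Proof. unfold Gfun in hG. unfold X, xbar2, E, L, th. cbv zeta in *. lra. Qed.

Definition Hf y := phi1 r sigma s c lam a q d gam b w y - lam * y.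

Lemma C11E y : C11 r sigma s c lam a q d gam b w * exp (th * y) = A / 2 * exp (th * (y - x1)).
Proof. unfold C11. cbv zeta. fold th. fold X. fold x1. fold A.
  replace (th * (y - x1)) with (- th * x1 + th * y) by ring. rewrite exp_plus. field. Qed.

Lemma C12E y : C12 r sigma s c lam a q d gam b w * exp (- th * y) = B / 2 / exp (th * (y - x1)).
Proof. unfold C12. cbv zeta. fold th. fold X. fold x1. fold B.
  assert (H1 : exp (th * x1) * exp (- th * y) * exp (th * (y - x1)) = 1).
  { rewrite <- !exp_plus. replace (th * x1 + - th * y + th * (y - x1)) with 0 by ring. apply exp_0. }
  assert (H2 := exp_pos (th * (y - x1))).
  transitivity (B / 2 * (exp (th * x1) * exp (- th * y) * exp (th * (y - x1))) / exp (th * (y - x1))).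
  field; lra. rewrite H1; field; lra. Qed.

Lemma th_neq : th <> 0.
Proof. pose proof th_pos; lra. Qed.

Lemma a_r : 1 - a * r > 0.
Proof. assert (a * r < lam * r) by (apply Rmult_lt_compat_r; lra). lra. Qed.

Lemma Hf_form y : Hf y = A / 2 * exp (th * (y - x1)) + B / 2 / exp (th * (y - x1)) + (y - s) / r - lam * y.
Proof. unfold Hf, phi1. cbv zeta. fold th. rewrite C11E, C12E. ring. Qed.

Lemma Hf_x1 : Hf x1 = a * X - c - lam * X.
Proof. rewrite Hf_form. replace (th * (x1 - x1)) with 0 by ring. rewrite exp_0.
  unfold A, B. pose proof th_neq. field. lra. Qed.

Lemma Hf_X : Hf X = a * X - lam * X.
Proof. rewrite Hf_form. replace (th * (X - x1)) with L.
  2:{ rewrite x1_def. pose proof th_neq. field. auto. }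
  rewrite expL. unfold A, B. rewrite x1_def. pose proof th_neq. pose proof a_r.
  rewrite X_eq. unfold E. field. repeat split; lra. Qed.

Let al := r * th * (A + B) / 2.
Let be := 1 - lam * r.

Lemma al_eq : al * (w - 1) ^ 2 = be * (w ^ 2 - 1 - 2 * L * w) + 2 * c * r * th * w.
Proof. unfold al, be, A, B. rewrite x1_def. pose proof th_neq. pose proof a_r.
  rewrite X_eq. unfold E. field. repeat split; lra. Qed.

Lemma al_key : al * (w + 1) - be * (w - 1) > 0.
Proof.
  assert (Hid : (w + 1) * (al * (w - 1) ^ 2) - be * (w - 1) ^ 3
     = 2 * (w + 1) * (be * (w - w * L - 1) + c * r * th * w) + 2 * be * (w - 1) ^ 2).
  { rewrite al_eq. ring. }
  assert (Hp : (w + 1) * (al * (w - 1) ^ 2) - be * (w - 1) ^ 3 > 0).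
  { rewrite Hid. unfold be, L, th. unfold be in hlr. 
    assert (0 < (w-1)^2) by (apply pow_lt; lra). nra. }
  assert (Hq : (w + 1) * (al * (w - 1) ^ 2) - be * (w - 1) ^ 3 = (al * (w + 1) - be * (w - 1)) * (w - 1) ^ 2) by ring.
  rewrite Hq in Hp. assert (0 < (w-1)^2) by (apply pow_lt; lra).
  destruct (Rle_or_lt (al * (w + 1) - be * (w - 1)) 0) as [h|h]; [|lra].
  assert ((al * (w + 1) - be * (w - 1)) * (w - 1) ^ 2 <= 0) by nra. lra. Qed.

Lemma deriv_pos t : 1 < t < w -> th * (A / 2 * t - B / 2 / t) + 1 / r - lam > 0.
Proof. intros [h1 h2]. pose proof al_key as K. pose proof th_pos.
  assert (Hl : al * (t + 1) - be * (t - 1) > 0).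
  { unfold be in *. destruct (Rle_or_lt be al) as [h|h]; unfold be in h; nra. }
  assert (Hr : th * (A / 2 * t - B / 2 / t) + 1 / r - lam = (t - 1) * (al * (t + 1) - be * (t - 1)) / (2 * t * r)).
  { unfold al, be, A, B. field. repeat split; lra. }
  rewrite Hr. apply Rdiv_lt_0_compat; [|nra]. nra. Qed.

Lemma Hf_deriv z : derivable_pt_lim Hf z (th * (A/2*exp(th*(z-x1)) - B/2/exp(th*(z-x1))) + 1/r - lam).
Proof. apply is_derive_Reals.
  replace (th * (A/2*exp(th*(z-x1)) - B/2/exp(th*(z-x1))) + 1/r - lam) with
   (th * (C11 r sigma s c lam a q d gam b w * exp (th * z)) - th * (C12 r sigma s c lam a q d gam b w * exp (- th * z)) + 1/r - lam)
   by (rewrite C11E, C12E; ring).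
  unfold Hf, phi1. cbv zeta. fold th. auto_derive. auto. field. lra. Qed.

Lemma Hf_mono y : x1 < y < X -> Hf x1 < Hf y < Hf X.
Proof. intros [h1 h2]. pose proof th_pos.
  assert (Hd : forall z, x1 < z < X -> th * (A/2*exp(th*(z-x1)) - B/2/exp(th*(z-x1))) + 1/r - lam > 0).
  { intros z [z1 z2]. apply deriv_pos. split.
    - rewrite <- exp_0. apply exp_increasing. nra.
    - rewrite <- expL. apply exp_increasing. 
      replace L with (th * (X - x1)) by (rewrite x1_def; field; lra). nra. }
  split.
  - destruct (MVT_cor2 Hf _ x1 y h1 (fun z _ => Hf_deriv z)) as [z [Hz1 Hz2]].
    assert (Hf y - Hf x1 > 0); [| lra]. rewrite Hz1. apply Rmult_lt_0_compat; [apply Hd; lra | lra].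
  - destruct (MVT_cor2 Hf _ y X h2 (fun z _ => Hf_deriv z)) as [z [Hz1 Hz2]].
    assert (Hf X - Hf y > 0); [| lra]. rewrite Hz1. apply Rmult_lt_0_compat; [apply Hd; lra | lra].
Qed.

End K.

Theorem lemmaA3 (r sigma s c lam a q d gam b w : R) :
  0 < r -> 0 < sigma -> 0 < s -> 0 < c -> 0 < lam -> 0 < a -> 0 < q ->
  0 < d -> 0 < gam -> 0 < b ->
  a < lam -> b < gam -> 1 - lam * r > 0 -> 1 - b * r > 0 ->
  1 < w ->
  Gfun r sigma s c lam a q d gam b w = 0 ->
  (1 - lam * r) * (w - w * ln w - 1) + c * r * theta r sigma * w > 0 ->
  (forall x : R,
     0 <= delta_opt r sigma q d gam b w x /\
     forall delta : R, 0 <= delta -> delta <> delta_opt r sigma q d gam b w x ->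
       W1 r sigma s c lam a q d gam b w (x + delta) - c - lam * delta <
       W1 r sigma s c lam a q d gam b w (x + delta_opt r sigma q d gam b w x) - c
         - lam * delta_opt r sigma q d gam b w x) /\
  (forall x : R,
     Rbar_lt (MW1 r sigma s c lam a q d gam b w x) (Finite (W1 r sigma s c lam a q d gam b w x))
     <-> xbar1 r sigma q d gam b w < x) /\
  (forall x : R,
     MW1 r sigma s c lam a q d gam b w x = Finite (W1 r sigma s c lam a q d gam b w x)
     <-> x <= xbar1 r sigma q d gam b w).
Proof.
  intros hr hsig hs hc hlam ha hq hd hgam hb hal hbg hlr hbr hw hG hex.
  pose proof (Hf_mono r sigma s c lam a q d gam b w hr hsig hal hlr hw hG hex) as Hmono.
  pose proof (Hf_x1 r sigma s c lam a q d gam b w hr hsig) as Hx1.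
  pose proof (Hf_X r sigma s c lam a q d gam b w hr hsig hal hlr hw hG) as HX.
  pose proof (x1_lt r sigma q d gam b w hr hsig hw) as Hlt.
  set (X := xbar2 r sigma q d gam b w) in *.
  set (x1 := xbar1 r sigma q d gam b w) in *.
  set (W := W1 r sigma s c lam a q d gam b w).
  set (H := Hf r sigma s c lam a q d gam b w) in *.
  assert (WX : forall y, X <= y -> W y = a * y).
  { intros y hy. unfold W, W1. cbv zeta. fold X. fold x1. destruct (Rle_dec X y); [auto|lra]. }
  assert (Wm : forall y, x1 < y < X -> W y = H y + lam * y).
  { intros y hy. unfold W, W1, H, Hf. cbv zeta. fold X. fold x1.
    destruct (Rle_dec X y); [lra|]. destruct (Rlt_dec x1 y); [ring|lra]. }
  assert (Wl : forall y, y <= x1 -> W y = a * X - c - lam * (X - y)).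
  { intros y hy. unfold W, W1. cbv zeta. fold X. fold x1.
    destruct (Rle_dec X y); [lra|]. destruct (Rlt_dec x1 y); [lra|auto]. }
  assert (Key : forall y, y <> X -> W y - lam * y < a * X - lam * X).
  { intros y hy. destruct (Rlt_or_le X y) as [h|h].
    - rewrite WX by lra. nra.
    - destruct (Rlt_or_le x1 y) as [h'|h'].
      + rewrite Wm by lra. destruct (Hmono y) as [_ h3]; lra.
      + rewrite Wl by lra. lra. }
  assert (P1 : forall x : R,
     0 <= delta_opt r sigma q d gam b w x /\
     forall delta : R, 0 <= delta -> delta <> delta_opt r sigma q d gam b w x ->
       W (x + delta) - c - lam * delta <
       W (x + delta_opt r sigma q d gam b w x) - c - lam * delta_opt r sigma q d gam b w x).
  { intros x. unfold delta_opt. fold X. destruct (Rle_dec x X) as [h|h].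
    - split; [lra|]. intros delta hd0 hne.
      replace (x + (X - x)) with X by ring. rewrite (WX X) by lra.
      assert (x + delta <> X) by (intro; apply hne; lra).
      pose proof (Key (x + delta) H0). lra.
    - split; [lra|]. intros delta hd0 hne.
      rewrite Rplus_0_r. rewrite !WX by lra. nra. }
  set (M := fun x => W (x + delta_opt r sigma q d gam b w x) - c - lam * delta_opt r sigma q d gam b w x).
  assert (HM : forall x, MW1 r sigma s c lam a q d gam b w x = Finite (M x)).
  { intros x. unfold MW1. apply is_lub_Rbar_unique. split.
    - intros y [delta [hd0 ->]]. simpl. fold W.
      destruct (Req_dec delta (delta_opt r sigma q d gam b w x)) as [e|e].
      + subst delta. unfold M. lra.
      + destruct (P1 x) as [_ hh]. pose proof (hh delta hd0 e). unfold M. lra.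
    - intros bb hb'. apply hb'. exists (delta_opt r sigma q d gam b w x).
      split; [apply P1|]. reflexivity. }
  assert (Mle : forall x, x <= x1 -> M x = W x).
  { intros x hx. unfold M, delta_opt. fold X. destruct (Rle_dec x X) as [h|h]; [|lra].
    replace (x + (X - x)) with X by ring. rewrite (WX X) by lra. rewrite Wl by lra. ring. }
  assert (Mlt : forall x, x1 < x -> M x < W x).
  { intros x hx. unfold M, delta_opt. fold X. destruct (Rle_dec x X) as [h|h].
    - replace (x + (X - x)) with X by ring. rewrite (WX X) by lra.
      destruct (Req_dec x X) as [e|e].
      + rewrite e, (WX X) by lra. lra.
      + rewrite Wm by lra. destruct (Hmono x) as [h3 _]; lra.
    - rewrite Rplus_0_r. lra. }
  split; [exact P1|]. split.
  - intros x. rewrite HM. simpl. fold W. split.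
    + intros h. destruct (Rlt_or_le x1 x) as [h'|h']; auto. rewrite Mle in h; lra.
    + intros h. apply Mlt; auto.
  - intros x. rewrite HM. fold W. split.
    + intros h. injection h as h. destruct (Rlt_or_le x1 x) as [h'|h']; auto.
      pose proof (Mlt x h'). lra.
    + intros h. rewrite Mle; auto.
Qed.
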